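(* Let $(X,d)$ be a complete non-trivial quasi-metric space ($d(x,y)\ge0$, $d(x,y)=0\iff x=y$, $d(x,y)=d(y,x)$) such that there is a constant $K\in[1,\infty)$ with the quadrilateral inequality $d(x,y)\le K[d(x,z)+d(z,v)+d(v,y)]$ for all $x,y,z,v\in X$. Let $f:X\to X$ satisfy $d(f(x),f(y))\le\alpha\,d(x,y)$ for all $x,y\in X$, with a constant $\alpha\in(0,1)$ such that $\alpha<1/K$. Then $f$ has a unique fixed point $x^*\in X$; for every $x_0\in X$ the iterates $x_{n+1}=f(x_n)$, $n=0,1,2,\dots$, converge to $x^*$, and $$d(x^*,x_n)\le\frac{K\alpha^n}{1-\alpha K}\,d(x_0,x_1)\quad\text{for all } n.$$ *)

(* Defs.v *)
From Stdlib Require Export Reals.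
Open Scope R_scope.

Definition qm_converges {X : Type} (d : X -> X -> R) (u : nat -> X) (x : X) : Prop :=
  forall eps : R, 0 < eps -> exists N : nat, forall n : nat, (N <= n)%nat -> d (u n) x < eps.

Definition qm_cauchy {X : Type} (d : X -> X -> R) (u : nat -> X) : Prop :=
  forall eps : R, 0 < eps -> exists N : nat, forall m n : nat,
    (N <= m)%nat -> (N <= n)%nat -> d (u m) (u n) < eps.

Definition qm_complete {X : Type} (d : X -> X -> R) : Prop :=
  forall u : nat -> X, qm_cauchy d u -> exists x : X, qm_converges d u x.

(* Main.v *)
Require Import Defs.
From Stdlib Require Import Reals.
From Stdlib Require Import Lra Lia.
Open Scope R_scope.

Lemma le_eps (u v : R) : (forall eps, 0 < eps -> u <= v + eps) -> u <= v.
Proof.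
  intros H. destruct (Rle_or_lt u v) as [h|h]; auto.
  specialize (H ((u - v)/2) ltac:(lra)). lra.
Qed.

Lemma pow_small (a B eps : R) : 0 <= a < 1 -> 0 <= B -> 0 < eps ->
  exists N, forall m, (N <= m)%nat -> B * a ^ m < eps.
Proof.
  intros Ha HB He.
  destruct (pow_lt_1_zero a ltac:(rewrite Rabs_right; lra) (eps / (B+1))
     ltac:(apply Rdiv_lt_0_compat; lra)) as [N HN].
  exists N. intros m Hm. specialize (HN m ltac:(lia)).
  rewrite Rabs_right in HN by (apply Rle_ge, pow_le; lra).
  assert (0 <= a ^ m) by (apply pow_le; lra).
  apply Rmult_lt_compat_r with (r := B + 1) in HN; [|lra].
  unfold Rdiv in HN. rewrite Rmult_assoc, Rinv_l, Rmult_1_r in HN by lra.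
  nra.
Qed.

Theorem theorem6p2 (X : Type) (d : X -> X -> R) (K alpha : R) (f : X -> X)
  (d_nonneg : forall x y : X, 0 <= d x y)
  (d_zero : forall x y : X, d x y = 0 <-> x = y)
  (d_sym : forall x y : X, d x y = d y x)
  (HK : 1 <= K)
  (d_quad : forall x y z v : X, d x y <= K * (d x z + d z v + d v y))
  (Hcomplete : qm_complete d)
  (Hnontrivial : exists x y : X, x <> y)
  (Halpha_pos : 0 < alpha) (Halpha_lt1 : alpha < 1) (HalphaK : alpha < 1 / K)
  (Hf : forall x y : X, d (f x) (f y) <= alpha * d x y) :
  exists xs : X,
    f xs = xs /\
    (forall y : X, f y = y -> y = xs) /\
    (forall x0 : X,
        qm_converges d (fun n => Nat.iter n f x0) xs /\
        (forall n : nat,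
            d xs (Nat.iter n f x0) <= K * alpha ^ n / (1 - alpha * K) * d x0 (f x0))).
Proof.
  assert (HaK : alpha * K < 1).
  { apply Rmult_lt_compat_r with (r := K) in HalphaK; [|lra].
    unfold Rdiv in HalphaK. rewrite Rmult_1_l, Rinv_l in HalphaK by lra. exact HalphaK. }
  assert (dxx : forall x, d x x = 0) by (intro; apply d_zero; reflexivity).
  assert (tri : forall x y z, d x y <= K * (d x z + d z y)).
  { intros x y z. specialize (d_quad x y z z). rewrite dxx in d_quad. lra. }
  assert (uniq : forall y z, f y = y -> f z = z -> y = z).
  { intros y z Hy Hz. apply d_zero. specialize (Hf y z). rewrite Hy, Hz in Hf.
    specialize (d_nonneg y z). nra. }
  assert (main : forall x0, exists z, f z = z /\
     qm_converges d (fun n => Nat.iter n f x0) z /\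
     (forall n : nat,
            d z (Nat.iter n f x0) <= K * alpha ^ n / (1 - alpha * K) * d x0 (f x0))).
  { intro x0.
    set (it := fun n => Nat.iter n f x0).
    set (a := d x0 (f x0)).
    set (B := K * a / (1 - alpha * K)).
    assert (Ha : 0 <= a) by apply d_nonneg.
    assert (HB : 0 <= B).
    { unfold B. apply Rmult_le_pos; [nra|]. apply Rlt_le, Rinv_0_lt_compat. lra. }
    assert (HBe : K * a + K * alpha * B = B).
    { unfold B. field. lra. }
    assert (step : forall n, d (it n) (it (S n)) <= alpha ^ n * a).
    { induction n as [|n IH]; simpl.
      - unfold a, it. simpl. lra.
      - change (d (f (it n)) (f (it (S n))) <= alpha * alpha ^ n * a).
        specialize (Hf (it n) (it (S n))). nra. }
    assert (far : forall k n, d (it n) (it (n + k)%nat) <= B * alpha ^ n).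
    { induction k as [|k IH]; intro n.
      - rewrite Nat.add_0_r, dxx. apply Rmult_le_pos; [lra|apply pow_le; lra].
      - replace (n + S k)%nat with (S n + k)%nat by lia.
        eapply Rle_trans; [apply (tri _ _ (it (S n)))|].
        specialize (step n). specialize (IH (S n)). change (alpha ^ S n) with (alpha * alpha ^ n) in IH.
        assert (0 <= alpha ^ n) by (apply pow_le; lra).
        replace (B * alpha ^ n) with (K * (alpha ^ n * a + B * (alpha * alpha ^ n)))
          by (transitivity (alpha ^ n * (K * a + K * alpha * B)); [ring | rewrite HBe; ring]).
        apply Rmult_le_compat_l; lra. }
    assert (cau : qm_cauchy d it).
    { intros eps He.
      destruct (pow_small alpha B eps ltac:(lra) HB He) as [N HN].
      exists N. intros m n Hm Hn.
      destruct (Nat.le_ge_cases m n) as [h|h].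
      - replace n with (m + (n - m))%nat by lia.
        eapply Rle_lt_trans; [apply far|]. apply HN; lia.
      - rewrite d_sym. replace m with (n + (m - n))%nat by lia.
        eapply Rle_lt_trans; [apply far|]. apply HN; lia. }
    destruct (Hcomplete it cau) as [z Hz].
    assert (fz : f z = z).
    { apply d_zero. apply Rle_antisym; [|apply d_nonneg].
      apply le_eps. intros eps He.
      destruct (Hz (eps / (2 * K)) ltac:(apply Rdiv_lt_0_compat; lra)) as [N HN].
      eapply Rle_trans; [apply (tri _ _ (it (S N)))|].
      change (it (S N)) with (f (it N)).
      specialize (HN N (le_n _)) as h1. specialize (HN (S N) ltac:(lia)) as h2.
      rewrite (d_sym (it N) z) in h1.
      specialize (Hf z (it N)).
      assert (h3 : K * (eps / (2 * K)) = eps / 2) by (field; lra).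
      assert (d (f z) (f (it N)) + d (f (it N)) z <= eps / (2 * K) + eps / (2*K)).
      { change (f (it N)) with (it (S N)) in Hf |- *. specialize (d_nonneg z (it N)). nra. }
      nra. }
    exists z. split; [exact fz|]. split; [exact Hz|].
    intro n. change (d z (Nat.iter n f x0)) with (d z (it n)). replace (K * alpha ^ n / (1 - alpha * K) * a) with (B * alpha ^ n)
      by (unfold B, a; field; lra).
    apply le_eps. intros eps He.
    destruct (Hz (eps / K) ltac:(apply Rdiv_lt_0_compat; lra)) as [N HN].
    specialize (HN (S n + N)%nat ltac:(lia)).
    rewrite d_sym.
    eapply Rle_trans; [apply (d_quad _ _ (it (S n)) (it (S n + N)%nat))|].
    specialize (step n). specialize (far N (S n)). change (alpha ^ S n) with (alpha * alpha ^ n) in far.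
    assert (h3 : K * (eps / K) = eps) by (field; lra).
    assert (0 <= alpha ^ n) by (apply pow_le; lra).
    replace (B * alpha ^ n + eps) with (K * (alpha ^ n * a + B * (alpha * alpha ^ n) + eps / K))
      by (transitivity (alpha^n*(K*a+K*alpha*B) + K*(eps/K)); [ring | rewrite HBe, h3; ring]).
    apply Rmult_le_compat_l; [lra|]. lra. }
  destruct Hnontrivial as [x [_ _]].
  destruct (main x) as [xs [Hxs _]].
  exists xs. split; [exact Hxs|]. split.
  - intros y Hy. apply uniq; auto.
  - intro x0. destruct (main x0) as [z [Hz [Hc Hb]]].
    rewrite <- (uniq z xs Hz Hxs). auto.
Qed.
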